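(* Let $c\ge 1$ be an integer and $\lambda,\mu,\alpha>0$ with $\rho:=\lambda/(c\mu)<1$. Let $(C,N)$ have the stationary distribution $(\pi_{i,j})$ of the continuous-time Markov chain on $\mathcal S=\{(i,j):0\le i\le c,\ j\ge i\}$ whose only transitions are: $(i,j)\to(i,j+1)$ at rate $\lambda$; $(i,j)\to(i+1,j)$ at rate $\min(j-i,c-i)\alpha$ for $i<c$, $j>i$; $(i,j)\to(i,j-1)$ at rate $i\mu$ for $i\ge1$, $j>i$; $(i,i)\to(i-1,i-1)$ at rate $i\mu$ for $i\ge 1$. Let $Q^{(c)}$ be a random variable with $\mathbb P(Q^{(c)}=k)=\mathbb P(N=c+k\mid C=c)$, $k\ge0$, and let $P_c(z)=\mathbb E[z^{Q^{(c)}}]$. Let $M=\sum_{k\ge1}k\,\pi_{c-1,c-1+k}$ and $p_{c-1,i}=\frac{1}{M}\sum_{k\ge i+1}\pi_{c-1,c-1+k}$ for $i\ge0$. Then $(p_{c-1,i})_{i\ge0}$ is a probability distribution and, for $|z|\le1$, $$P_c(z)=\left(\sum_{i=0}^\infty p_{c-1,i}z^i\right)\frac{1-\rho}{1-\rho z}.$$ Equivalently, $Q^{(c)}$ has the same distribution as $Q_{ON\text{-}IDLE}+Q_{Res}$, where $Q_{ON\text{-}IDLE}$ and $Q_{Res}$ are independent, $\mathbb P(Q_{ON\text{-}IDLE}=n)=(1-\rho)\rho^n$ ($n\ge0$), and $\mathbb P(Q_{Res}=i)=p_{c-1,i}$ ($i\ge0$).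
   Context: The chain models an M/M/$c$ queue with setup times under the ON-OFF policy: $C$ is the number of busy servers and $N$ the number of jobs in the system in steady state; arrivals Poisson($\lambda$), services exp($\mu$), setups exp($\alpha$). Note $p_{c-1,i}=\mathbb P(N-C>i\mid C=c-1)/\mathbb E[N-C\mid C=c-1]$. *)

(* Defs.v *)
From Stdlib Require Import Reals Lra Lia Arith.
From Coquelicot Require Import Coquelicot.
Open Scope R_scope.

Definition inS (c i j : nat) : bool := (i <=? c)%nat && (i <=? j)%nat.

Definition indic (b : bool) (x : R) : R := if b then x else 0.

Definition rate (c : nat) (lam mu alpha : R) (i j i' j' : nat) : R :=
    indic ((i' =? i)%nat && (j' =? S j)%nat) lam
  + indic ((i <? c)%nat && (i <? j)%nat && (i' =? S i)%nat && (j' =? j)%nat)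
          (INR (Nat.min (j - i) (c - i)) * alpha)
  + indic ((1 <=? i)%nat && (i <? j)%nat && (i' =? i)%nat && (j' =? pred j)%nat)
          (INR i * mu)
  + indic ((1 <=? i)%nat && (j =? i)%nat && (i' =? pred i)%nat && (j' =? pred i)%nat)
          (INR i * mu).

(* Every transition changes the second coordinate by at most one, so all
   neighbours (predecessors and successors) of (i,j) lie in the finite window
   {(i',j') : i' <= c, j' <= j+1}.  The sums below range over this window,
   hence over all states of S that can interact with (i,j). *)
Definition window_sum (c j : nat) (f : nat -> nat -> R) : R :=
  sum_f_R0 (fun i' => sum_f_R0 (fun j' => f i' j') (S j)) c.

Definition out_rate (c : nat) (lam mu alpha : R) (i j : nat) : R :=
  window_sum c j (fun i' j' =>
    indic (inS c i' j' && negb ((i' =? i)%nat && (j' =? j)%nat))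
          (rate c lam mu alpha i j i' j')).

Definition stationary (c : nat) (lam mu alpha : R) (pi : nat -> nat -> R) : Prop :=
  (forall i j, inS c i j = true -> 0 <= pi i j) /\
  (exists m : nat -> R,
      (forall i, (i <= c)%nat -> is_series (fun k => pi i (i + k)%nat) (m i)) /\
      sum_f_R0 m c = 1) /\
  (forall i j, inS c i j = true ->
     pi i j * out_rate c lam mu alpha i j =
     window_sum c j (fun i' j' =>
       indic (inS c i' j' && negb ((i' =? i)%nat && (j' =? j)%nat))
             (pi i' j' * rate c lam mu alpha i' j' i j))).

Definition probC (c : nat) (pi : nat -> nat -> R) : R :=
  Series (fun k => pi c (c + k)%nat).

Definition qc (c : nat) (pi : nat -> nat -> R) (k : nat) : R :=
  pi c (c + k)%nat / probC c pi.

Definition Mc (c : nat) (pi : nat -> nat -> R) : R :=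
  Series (fun k => INR k * pi (c - 1)%nat (c - 1 + k)%nat).

Definition pres (c : nat) (pi : nat -> nat -> R) (i : nat) : R :=
  Series (fun m => pi (c - 1)%nat (c - 1 + (i + 1 + m))%nat) / Mc c pi.

(* Main.v *)
Require Import Defs.
From Stdlib Require Import Reals Lra Lia Arith.
From Coquelicot Require Import Coquelicot.
Open Scope R_scope.

Lemma sum_extract (F : nat -> R) (n a : nat) : (a <= n)%nat ->
  sum_f_R0 F n = F a + sum_f_R0 (fun i => if (i =? a)%nat then 0 else F i) n.
Proof.
  induction n as [|n IH]; intros Ha.
  - assert (a = 0%nat) by lia; subst. simpl. lra.
  - destruct (Nat.eq_dec a (S n)) as [->|Hne].
    + rewrite !tech5, Nat.eqb_refl.
      assert (E: sum_f_R0 (fun i => if (i =? S n)%nat then 0 else F i) n = sum_f_R0 F n).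
      { apply sum_eq. intros i Hi. destruct (Nat.eqb_spec i (S n)); [lia|reflexivity]. }
      rewrite E. lra.
    + rewrite !tech5. rewrite IH by lia. destruct (Nat.eqb_spec (S n) a); [lia|]. lra.
Qed.

Lemma sum_zero (F : nat -> R) n : (forall i, (i <= n)%nat -> F i = 0) -> sum_f_R0 F n = 0.
Proof.
  induction n; intros H; simpl.
  - apply H; lia.
  - rewrite IHn by (intros; apply H; lia). rewrite H by lia. lra.
Qed.

Lemma window_extract c j f a b : (a <= c)%nat -> (b <= S j)%nat ->
  window_sum c j f = f a b + window_sum c j (fun i' j' =>
     if ((i' =? a)%nat && (j' =? b)%nat)%bool then 0 else f i' j').
Proof.
  intros Ha Hb. unfold window_sum.
  rewrite (sum_extract _ c a Ha).
  rewrite (sum_extract (fun j' => f a j') (S j) b Hb).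
  rewrite (sum_extract (fun i' => sum_f_R0 (fun j' =>
     if ((i' =? a)%nat && (j' =? b)%nat)%bool then 0 else f i' j') (S j)) c a Ha).
  rewrite Nat.eqb_refl. simpl andb.
  rewrite Rplus_assoc. f_equal. f_equal.
  apply sum_eq. intros i Hi. destruct (Nat.eqb_spec i a); [reflexivity|].
  simpl. reflexivity.
Qed.

Lemma window_zero c j f : (forall i' j', (i' <= c)%nat -> (j' <= S j)%nat -> f i' j' = 0) ->
  window_sum c j f = 0.
Proof.
  intros H. unfold window_sum. apply sum_zero. intros i Hi. apply sum_zero. intros; apply H; lia.
Qed.

Lemma window_ge c j f a b : (forall i' j', 0 <= f i' j') -> (a <= c)%nat -> (b <= S j)%nat ->
  f a b <= window_sum c j f.
Proof.
  intros H Ha Hb. rewrite (window_extract c j f a b Ha Hb).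
  assert (0 <= window_sum c j (fun i' j' =>
     if ((i' =? a)%nat && (j' =? b)%nat)%bool then 0 else f i' j')).
  { unfold window_sum. apply cond_pos_sum. intros. apply cond_pos_sum. intros.
    destruct (_ && _)%bool; [lra|apply H]. }
  lra.
Qed.

Ltac bdestr :=
  repeat (cbn [andb negb orb indic] in *;
   match goal with
   | |- context [Nat.eqb ?x ?y] => destruct (Nat.eqb_spec x y); try lia
   | |- context [Nat.ltb ?x ?y] => destruct (Nat.ltb_spec x y); try lia
   | |- context [Nat.leb ?x ?y] => destruct (Nat.leb_spec x y); try lia
   end); cbn [andb negb orb indic] in *.

Lemma out_c c lam mu alpha k : (1 <= c)%nat ->
  out_rate c lam mu alpha c (c + k) = lam + INR c * mu.
Proof.
  intros Hc. unfold out_rate.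
  rewrite (window_extract _ _ _ c (S (c+k))) by lia.
  destruct k as [|k].
  - rewrite (window_extract _ _ _ (c-1) (c-1)) by lia.
    rewrite window_zero.
    2:{ intros i' j' Hi Hj. unfold rate, inS. bdestr; lra. }
    unfold rate, inS. bdestr. lra.
  - rewrite (window_extract _ _ _ c (c+k)) by lia.
    rewrite window_zero.
    2:{ intros i' j' Hi Hj. unfold rate, inS. bdestr; lra. }
    unfold rate, inS. bdestr. lra.
Qed.

Definition inflow c lam mu alpha (pi : nat -> nat -> R) i j :=
  window_sum c j (fun i' j' =>
       indic (inS c i' j' && negb ((i' =? i)%nat && (j' =? j)%nat))
             (pi i' j' * rate c lam mu alpha i' j' i j)).

Lemma in_c0 c lam mu alpha pi : (1 <= c)%nat ->
  inflow c lam mu alpha pi c c = alpha * pi (c-1)%nat c + INR c * mu * pi c (S c).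
Proof.
  intros Hc. unfold inflow.
  rewrite (window_extract _ _ _ c (S c)) by lia.
  rewrite (window_extract _ _ _ (c-1) c) by lia.
  rewrite window_zero.
  2:{ intros i' j' Hi Hj. unfold rate, inS. bdestr; lra. }
  unfold rate, inS. bdestr.
  all: replace (Nat.min (c - (c - 1)) (c - (c - 1))) with 1%nat by lia; simpl; lra.
Qed.

Lemma in_cS c lam mu alpha pi k : (1 <= c)%nat ->
  inflow c lam mu alpha pi c (c + S k) =
  lam * pi c (c + k)%nat + alpha * pi (c-1)%nat (c + S k)%nat + INR c * mu * pi c (S (c + S k)).
Proof.
  intros Hc. unfold inflow.
  rewrite (window_extract _ _ _ c (S (c + S k))) by lia.
  rewrite (window_extract _ _ _ (c-1) (c + S k)) by lia.
  rewrite (window_extract _ _ _ c (c + k)) by lia.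
  rewrite window_zero.
  2:{ intros i' j' Hi Hj. unfold rate, inS. bdestr; lra. }
  unfold rate, inS. bdestr.
  all: replace (Nat.min (c + S k - (c - 1)) (c - (c - 1))) with 1%nat by lia; simpl; lra.
Qed.

Lemma lim_uniq u (a b : R) : is_lim_seq u a -> is_lim_seq u b -> a = b.
Proof.
  intros Ha Hb. apply is_lim_seq_unique in Ha. apply is_lim_seq_unique in Hb.
  rewrite Ha in Hb. injection Hb. auto.
Qed.

Lemma ser_lim a (l : R) : is_series a l -> is_lim_seq (fun n => sum_f_R0 a n) l.
Proof.
  intros H. apply is_lim_seq_Reals. apply is_series_Reals in H. exact H.
Qed.

Lemma lim_ser a (l : R) : is_lim_seq (fun n => sum_f_R0 a n) l -> is_series a l.
Proof.
  intros H. apply is_series_Reals. apply (is_lim_seq_Reals (fun n => sum_f_R0 a n) l). exact H.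
Qed.

Lemma tail_ge (T : nat -> R) : (forall n, T (S n) <= T n) ->
  forall d h, INR d * T (h + d)%nat <= sum_f_R0 T (h + d) - sum_f_R0 T h.
Proof.
  intros Hdec. induction d as [|d IH]; intros h.
  - rewrite Nat.add_0_r. simpl. lra.
  - replace (h + S d)%nat with (S (h + d)) by lia. rewrite tech5.
    specialize (IH h). specialize (Hdec (h + d)%nat). rewrite S_INR.
    assert (0 <= INR d) by apply pos_INR. nra.
Qed.

Lemma nT_to0 (T : nat -> R) (S0 : R) : (forall n, 0 <= T n) -> (forall n, T (S n) <= T n) ->
  is_series T S0 -> is_lim_seq (fun n => INR n * T n) 0.
Proof.
  intros Hpos Hdec Hs. apply ser_lim in Hs. apply (is_lim_seq_Reals (fun n => sum_f_R0 T n) S0) in Hs.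
  apply is_lim_seq_Reals. intros eps Heps.
  destruct (Hs (eps/4)) as [N HN]; [lra|].
  exists (2*N)%nat. intros n Hn.
  pose proof (Nat.div_mod_eq n 2) as Hd. pose proof (Nat.mod_upper_bound n 2 ltac:(lia)) as Hm.
  set (h := (n/2)%nat) in *.
  assert (Hh : (h >= N)%nat) by lia.
  pose proof (tail_ge T Hdec (n - h) h) as Ht. replace (h + (n - h))%nat with n in Ht by lia.
  assert (Hle : INR n <= 2 * INR (n - h)).
  { replace 2 with (INR 2) by reflexivity. rewrite <- mult_INR. apply le_INR. lia. }
  pose proof (HN n ltac:(lia)) as H1. pose proof (HN h Hh) as H2.
  unfold Rdist in *. rewrite Rminus_0_r.
  assert (0 <= INR n * T n) by (apply Rmult_le_pos; [apply pos_INR|apply Hpos]).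
  rewrite Rabs_pos_eq by lra.
  apply Rabs_def2 in H1. apply Rabs_def2 in H2.
  assert (INR n * T n <= 2 * (INR (n - h) * T n)) by (specialize (Hpos n); nra).
  lra.
Qed.

Lemma core (A lam al X G : R) (x g : nat -> R) :
  0 < al -> (forall n, 0 <= g n) ->
  is_series x X -> is_series g G ->
  (lam + A) * x 0%nat = al * g 1%nat + A * x 1%nat ->
  (forall k, (lam + A) * x (S k) = lam * x k + al * g (S (S k)) + A * x (S (S k))) ->
  let T := fun i => G - sum_f_R0 g i in
  (A * x 0%nat = al * T 0%nat /\ forall n, A * x (S n) = lam * x n + al * T (S n)) /\
  (forall i, 0 <= T i) /\
  is_series T ((A - lam) * X / al) /\
  is_series (fun k => INR k * g k) ((A - lam) * X / al).
Proof.
  intros Hal Hg Hx HG H0 HS T.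
  assert (HD : forall n, A * x (S n) - lam * x n = A * x 0%nat - al * (sum_f_R0 g (S n) - g 0%nat)).
  { induction n as [|n IH].
    - simpl. lra.
    - rewrite tech5. specialize (HS n). lra. }
  assert (Hx0 : is_lim_seq x 0).
  { apply ex_series_lim_0. exists X. exact Hx. }
  assert (HGl := ser_lim g G HG).
  assert (HA0 : A * x 0%nat = al * T 0%nat).
  { assert (L1 : is_lim_seq (fun n => A * x (S n) - lam * x n) (A * 0 - lam * 0)).
    { apply is_lim_seq_minus'. 
      - apply (is_lim_seq_scal_l (fun n => x (S n)) A 0). apply (is_lim_seq_incr_1 x 0). exact Hx0.
      - apply (is_lim_seq_scal_l x lam 0). exact Hx0. }
    assert (L2 : is_lim_seq (fun n => A * x 0%nat - al * (sum_f_R0 g (S n) - g 0%nat))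
                   (A * x 0%nat - al * (G - g 0%nat))).
    { apply is_lim_seq_minus'. apply is_lim_seq_const.
      apply (is_lim_seq_scal_l _ al (G - g 0%nat)).
      apply is_lim_seq_minus'. 2: apply is_lim_seq_const.
      apply (is_lim_seq_incr_1 (fun n => sum_f_R0 g n) G). exact HGl. }
    assert (E := lim_uniq _ _ _ L1 (is_lim_seq_ext _ _ _ (fun n => eq_sym (HD n)) L2)).
    unfold T. simpl. lra. }
  assert (HTS : forall n, A * x (S n) = lam * x n + al * T (S n)).
  { intros n. specialize (HD n). unfold T in *. simpl in HA0. lra. }
  assert (Tpos : forall i, 0 <= T i).
  { intros i. unfold T. apply is_series_Reals in HG.
    pose proof (sum_incr g i G HG Hg). lra. }
  assert (Tdec : forall n, T (S n) <= T n).
  { intros n. unfold T. rewrite tech5. specialize (Hg (S n)). lra. }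
  assert (HU : forall n, al * sum_f_R0 T n = A * sum_f_R0 x n - lam * (sum_f_R0 x n - x n)).
  { induction n as [|n IH].
    - simpl. lra.
    - rewrite !tech5. specialize (HTS n). lra. }
  assert (HTser : is_series T ((A - lam) * X / al)).
  { apply lim_ser.
    apply is_lim_seq_ext with (u := fun n => (A * sum_f_R0 x n - lam * (sum_f_R0 x n - x n)) / al).
    { intros n. rewrite <- HU. field. lra. }
    replace ((A - lam) * X / al) with ((A * X - lam * (X - 0)) / al) by (field; lra).
    apply (is_lim_seq_scal_r _ (/ al) (A * X - lam * (X - 0))).
    apply is_lim_seq_minus'.
    - apply (is_lim_seq_scal_l _ A X). apply ser_lim; exact Hx.
    - apply (is_lim_seq_scal_l _ lam (X - 0)). apply is_lim_seq_minus'. apply ser_lim; exact Hx. exact Hx0. }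
  split; [split; assumption|]. split; [assumption|]. split; [assumption|].
  assert (HP : forall n, sum_f_R0 (fun k => INR k * g k) (S n) = sum_f_R0 T n - INR (S n) * T (S n)).
  { induction n as [|n IH].
    - unfold T. simpl. lra.
    - rewrite tech5, IH, tech5. unfold T. rewrite !tech5. rewrite !S_INR. ring. }
  apply lim_ser. apply (is_lim_seq_incr_1 _ ((A - lam) * X / al)).
  apply is_lim_seq_ext with (u := fun n => sum_f_R0 T n - INR (S n) * T (S n)).
  { intros n. rewrite HP. reflexivity. }
  replace ((A - lam) * X / al) with ((A - lam) * X / al - 0) by ring.
  apply is_lim_seq_minus'. apply ser_lim; exact HTser.
  apply (is_lim_seq_incr_1 (fun n => INR n * T n) 0).
  apply (nT_to0 T _ Tpos Tdec HTser).
Qed.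

Lemma indic_nonneg b x : 0 <= x -> 0 <= indic b x.
Proof. destruct b; simpl; lra. Qed.

Lemma rate_nonneg c lam mu alpha i j i' j' : 0 <= lam -> 0 <= mu -> 0 <= alpha ->
  0 <= rate c lam mu alpha i j i' j'.
Proof.
  intros. unfold rate.
  assert (0 <= INR i * mu) by (apply Rmult_le_pos; [apply pos_INR|lra]).
  assert (0 <= INR (Nat.min (j - i) (c - i)) * alpha) by (apply Rmult_le_pos; [apply pos_INR|lra]).
  repeat apply Rplus_le_le_0_compat; apply indic_nonneg; lra.
Qed.

Lemma zero_in c lam mu alpha pi i j a b :
  0 < lam -> 0 < mu -> 0 < alpha -> stationary c lam mu alpha pi ->
  inS c i j = true -> pi i j = 0 -> (a <= c)%nat -> (b <= S j)%nat ->
  inS c a b = true -> ((a =? i)%nat && (b =? j)%nat)%bool = false ->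
  0 < rate c lam mu alpha a b i j -> pi a b = 0.
Proof.
  intros Hl Hm Ha [Hpos [_ Hbal]] HS Hz Hac Hbj HSab Hne Hr.
  specialize (Hbal i j HS). rewrite Hz, Rmult_0_l in Hbal.
  assert (Hf : forall i' j', 0 <= indic (inS c i' j' && negb ((i' =? i)%nat && (j' =? j)%nat))
             (pi i' j' * rate c lam mu alpha i' j' i j)).
  { intros i' j'. destruct (inS c i' j') eqn:E; simpl; [|lra].
    destruct (negb _); simpl; [|lra]. apply Rmult_le_pos. apply Hpos; auto.
    apply rate_nonneg; lra. }
  pose proof (window_ge c j _ a b Hf Hac Hbj) as G. rewrite <- Hbal in G.
  rewrite HSab, Hne in G. simpl in G.
  pose proof (Hpos a b HSab). nra.
Qed.

Lemma step_down c lam mu alpha pi i :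
  0 < lam -> 0 < mu -> 0 < alpha -> stationary c lam mu alpha pi ->
  (1 <= i)%nat -> (i <= c)%nat -> (forall k, pi i (i + k)%nat = 0) ->
  forall k, pi (i - 1)%nat (i - 1 + k)%nat = 0.
Proof.
  intros Hl Hm Ha Hst Hi Hic Hz.
  assert (H1 : forall k, pi (i - 1)%nat (i + k)%nat = 0).
  { intros k. apply (zero_in c lam mu alpha pi i (i + k) (i-1) (i+k)); auto.
    all: try lia.
    all: try (unfold inS; bdestr; reflexivity).
    all: try (bdestr; reflexivity).
    unfold rate. bdestr.
    all: assert (0 < INR (Nat.min (i + k - (i - 1)) (c - (i - 1)))) by (apply lt_0_INR; lia).
    all: nra. }
  intros [|k].
  - rewrite Nat.add_0_r. apply (zero_in c lam mu alpha pi (i-1) i (i-1) (i-1)); auto.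
    all: try lia.
    all: try (unfold inS; bdestr; reflexivity).
    all: try (bdestr; reflexivity).
    all: try (rewrite <- (Nat.add_0_r i) at 2; apply H1).
    unfold rate. bdestr.
    all: try (assert (0 <= INR (Nat.min (i - (i - 1)) (c - (i - 1)))) by apply pos_INR).
    all: try (assert (0 <= INR (i-1)) by apply pos_INR).
    all: try nra.
  - replace (i - 1 + S k)%nat with (i + k)%nat by lia. apply H1.
Qed.

Lemma all_zero c lam mu alpha pi :
  0 < lam -> 0 < mu -> 0 < alpha -> stationary c lam mu alpha pi ->
  (forall k, pi c (c + k)%nat = 0) ->
  forall d, (d <= c)%nat -> forall k, pi (c - d)%nat (c - d + k)%nat = 0.
Proof.
  intros Hl Hm Ha Hst Hz. induction d as [|d IH]; intros Hd k.
  - rewrite Nat.sub_0_r. apply Hz.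
  - replace (c - S d)%nat with (c - d - 1)%nat by lia.
    apply (step_down c lam mu alpha pi (c - d)); auto; try lia.
    apply IH. lia.
Qed.

Lemma real_part (c : nat) (lam mu alpha : R) (pi : nat -> nat -> R) :
  (1 <= c)%nat -> 0 < lam -> 0 < mu -> 0 < alpha ->
  lam / (INR c * mu) < 1 ->
  stationary c lam mu alpha pi ->
  let rho := lam / (INR c * mu) in
  (0 < probC c pi) /\ (0 < Mc c pi) /\
  (forall i, 0 <= pres c pi i) /\ is_series (pres c pi) 1 /\
  is_series (qc c pi) 1 /\ (forall n, 0 <= qc c pi n) /\
  qc c pi 0%nat = (1 - rho) * pres c pi 0%nat /\
  (forall n, qc c pi (S n) = rho * qc c pi n + (1 - rho) * pres c pi (S n)).
Proof.
  intros Hc Hl Hm Ha Hrho Hst rho.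
  assert (HA : 0 < INR c * mu).
  { apply Rmult_lt_0_compat; [apply lt_0_INR; lia|lra]. }
  set (A := INR c * mu) in *.
  assert (HlA : lam < A).
  { unfold rho in *. apply Rmult_lt_compat_r with (r := A) in Hrho; [|lra].
    field_simplify in Hrho; lra. }
  pose proof Hst as [Hpos [[m [Hms Hsum]] Hbal]].
  set (x := fun k => pi c (c + k)%nat).
  set (g := fun k => pi (c - 1)%nat (c - 1 + k)%nat).
  assert (Hx : is_series x (m c)) by (apply Hms; lia).
  assert (Hg : is_series g (m (c-1)%nat)) by (apply Hms; lia).
  assert (Hxp : forall n, 0 <= x n) by (intros; apply Hpos; unfold inS; bdestr; reflexivity).
  assert (Hgp : forall n, 0 <= g n) by (intros; apply Hpos; unfold inS; bdestr; reflexivity).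
  assert (B0 : (lam + A) * x 0%nat = alpha * g 1%nat + A * x 1%nat).
  { pose proof (Hbal c c ltac:(unfold inS; bdestr; reflexivity)) as H.
    pose proof (out_c c lam mu alpha 0 Hc) as E. rewrite Nat.add_0_r in E. rewrite E in H.
    pose proof (in_c0 c lam mu alpha pi Hc) as E2. unfold inflow in E2. rewrite E2 in H.
    unfold x, g. rewrite Nat.add_0_r. replace (c - 1 + 1)%nat with c by lia.
    replace (c + 1)%nat with (S c) by lia. fold A in H. lra. }
  assert (BS : forall k, (lam + A) * x (S k) = lam * x k + alpha * g (S (S k)) + A * x (S (S k))).
  { intros k. pose proof (Hbal c (c + S k)%nat ltac:(unfold inS; bdestr; reflexivity)) as H.
    rewrite (out_c c lam mu alpha (S k) Hc) in H.
    pose proof (in_cS c lam mu alpha pi k Hc) as E2. unfold inflow in E2. rewrite E2 in H.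
    unfold x, g. replace (c - 1 + S (S k))%nat with (c + S k)%nat by lia.
    replace (c + S (S k))%nat with (S (c + S k)) by lia. fold A in H. lra. }
  pose proof (core A lam alpha (m c) (m (c-1)%nat) x g Ha Hgp Hx Hg B0 BS) as
    [[HT0 HTS] [Tpos [HTser HMser]]].
  set (T := fun i => m (c - 1)%nat - sum_f_R0 g i) in *.
  set (M := (A - lam) * m c / alpha) in *.
  assert (EM : Mc c pi = M) by (apply is_series_unique; exact HMser).
  assert (EP : probC c pi = m c) by (apply is_series_unique; exact Hx).
  assert (Epres : forall i, pres c pi i = T i / M).
  { intros i. unfold pres. rewrite EM. f_equal. apply is_series_unique.
    assert (H := is_series_incr_n g (S i) (T i) ltac:(lia)).
    simpl pred in H.
    assert (H' : is_series (fun k : nat => g (S i + k)%nat) (T i)).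
    { apply H. match goal with |- is_series _ ?v => replace v with (m (c-1)%nat) end. exact Hg.
      transitivity (T i + sum_f_R0 g i). unfold T; ring. rewrite <- sum_n_Reals. reflexivity. }
    apply is_series_ext with (a := fun k => g (S i + k)%nat); [|exact H'].
    intros n. unfold g. f_equal. lia. }
  assert (Eqc : forall n, qc c pi n = x n / m c).
  { intros n. unfold qc. rewrite EP. reflexivity. }
  assert (HX : 0 < m c).
  { assert (HX0 : 0 <= m c).
    { apply is_series_Reals in Hx. pose proof (sum_incr x 0 (m c) Hx Hxp). simpl in H. specialize (Hxp 0%nat). lra. }
    destruct (Rle_lt_or_eq_dec 0 (m c) HX0) as [?|E]; [assumption|exfalso].
    assert (Hz : forall k, pi c (c + k)%nat = 0).
    { intros k. apply is_series_Reals in Hx. pose proof (sum_incr x k (m c) Hx Hxp).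
      assert (x k <= sum_f_R0 x k).
      { destruct k. simpl; lra. rewrite tech5. pose proof (cond_pos_sum x k Hxp). lra. }
      specialize (Hxp k). fold (x k). lra. }
    pose proof (all_zero c lam mu alpha pi Hl Hm Ha Hst Hz) as Z.
    assert (Hm0 : forall i, (i <= c)%nat -> m i = 0).
    { intros i Hi. specialize (Z (c - i)%nat ltac:(lia)). replace (c - (c - i))%nat with i in Z by lia.
      assert (Hs := Hms i Hi). apply is_series_unique in Hs. rewrite <- Hs.
      assert (H0 : is_series (fun k => pi i (i+k)%nat) 0).
      { apply lim_ser. apply is_lim_seq_ext with (u := fun _ => 0).
        intros n; symmetry; apply sum_zero; intros; apply Z. apply is_lim_seq_const. }
      apply is_series_unique in H0. congruence. }
    rewrite sum_zero in Hsum; [lra|]. exact Hm0. }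
  assert (HM : 0 < M).
  { unfold M. apply Rdiv_lt_0_compat; [|lra]. apply Rmult_lt_0_compat; lra. }
  assert (Erho : rho = lam / A) by reflexivity.
  split; [rewrite EP; exact HX|].
  split; [rewrite EM; exact HM|].
  split.
  { intros i. rewrite Epres. apply Rdiv_le_0_compat; [apply Tpos|exact HM]. }
  split.
  { apply is_series_ext with (a := fun i => T i * / M).
    { intros; rewrite Epres; reflexivity. }
    replace 1 with (M * / M) by (field; lra). apply is_series_scal_r. exact HTser. }
  split.
  { apply is_series_ext with (a := fun i => x i * / m c).
    { intros; rewrite Eqc; reflexivity. }
    replace 1 with (m c * / m c) by (field; lra). apply is_series_scal_r. exact Hx. }
  split.
  { intros n. rewrite Eqc. apply Rdiv_le_0_compat; [apply Hxp|exact HX]. }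
  split.
  { rewrite Eqc, Epres. rewrite Erho. unfold M.
    assert (E0 : x 0%nat = alpha * T 0%nat / A).
    { apply (Rmult_eq_reg_l A); [|lra]. rewrite HT0. unfold T. field. lra. }
    rewrite E0. field. repeat split; lra. }
  intros n. rewrite !Eqc, Epres, Erho. unfold M.
  assert (E1 : x (S n) = (lam * x n + alpha * T (S n)) / A).
  { apply (Rmult_eq_reg_l A); [|lra]. rewrite HTS. unfold T. field. lra. }
  rewrite E1. field. repeat split; lra.
Qed.

Lemma gen_fun (p q : nat -> R) (rho : R) (z : C) :
  0 <= rho < 1 -> Cmod z <= 1 ->
  (forall i, 0 <= p i) -> is_series p 1 ->
  (forall i, 0 <= q i) -> is_series q 1 ->
  q 0%nat = (1 - rho) * p 0%nat ->
  (forall n, q (S n) = rho * q n + (1 - rho) * p (S n)) ->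
  exists s : C,
    is_series (fun i => (RtoC (p i) * Cpow z i)%C) s /\
    is_series (fun k => (RtoC (q k) * Cpow z k)%C)
              (s * (RtoC (1 - rho) / (1 - RtoC rho * z)))%C.
Proof.
  intros Hr Hz Hp Hps Hq Hqs Hq0 HqS.
  assert (Hb : forall (r : nat -> R), (forall i, 0 <= r i) -> forall n,
            Cmod (RtoC (r n) * Cpow z n)%C <= r n).
  { intros r Hr0 n. rewrite Cmod_mult, Cmod_pow, Cmod_R.
    rewrite Rabs_pos_eq by apply Hr0.
    assert (Cmod z ^ n <= 1).
    { rewrite <- (pow1 n). apply pow_incr. split; [apply Cmod_ge_0|exact Hz]. }
    specialize (Hr0 n). nra. }
  destruct (ex_series_le (V := C_CompleteNormedModule) (fun i => (RtoC (p i) * Cpow z i)%C) p (Hb p Hp) (ex_intro _ 1 Hps)) as [s Hs].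
  destruct (ex_series_le (V := C_CompleteNormedModule) (fun i => (RtoC (q i) * Cpow z i)%C) q (Hb q Hq) (ex_intro _ 1 Hqs)) as [Aq HAq]. change C in s, Aq.
  exists s. split; [exact Hs|].
  set (a := fun k => (RtoC (q k) * Cpow z k)%C) in *.
  set (a' := fun k : nat => (match k with 0%nat => RtoC 0 | S k => a k end : C)).
  assert (Ha' : is_series a' Aq).
  { apply is_series_decr_1.
    match goal with |- is_series _ ?v => replace v with Aq end.
    exact HAq. simpl. change (Aq = Aq + - 0)%C. ring. }
  set (w := (RtoC rho * z)%C).
  assert (H1 := is_series_minus a (fun k => scal w (a' k)) Aq (scal w Aq) HAq (is_series_scal w a' Aq Ha')).
  assert (H2 := is_series_scal (RtoC (1 - rho)) _ s Hs).
  assert (Hext : forall n, plus (a n) (opp (scal w (a' n))) =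
                  scal (RtoC (1 - rho)) (RtoC (p n) * Cpow z n)%C).
  { intros [|n]; change (plus ?x ?y) with (Cplus x y); change (opp ?x) with (Copp x);
      change (scal ?x ?y) with (Cmult x y); unfold a', a, w.
    - rewrite Hq0. rewrite RtoC_mult. simpl. match goal with |- ?x = ?y => change (@eq C x y) end; ring.
    - rewrite HqS. rewrite RtoC_plus, !RtoC_mult. rewrite Cpow_S. match goal with |- ?x = ?y => change (@eq C x y) end; ring. }
  apply (is_series_ext _ _ _ Hext) in H1.
  assert (E := filterlim_locally_unique _ _ _ H1 H2).
  change (plus ?x ?y) with (Cplus x y) in E; change (opp ?x) with (Copp x) in E;
      change (scal ?x ?y) with (Cmult x y) in E.
  assert (Hnz : (1 - RtoC rho * z)%C <> 0%C).
  { intros E0. assert (Ew : (RtoC rho * z)%C = 1%C).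
    { apply (f_equal (fun u => (1 - u)%C)) in E0. 
      transitivity (1 - (1 - RtoC rho * z))%C. ring. rewrite E0. ring. }
    apply (f_equal Cmod) in Ew. rewrite Cmod_mult, Cmod_R, Cmod_1, Rabs_pos_eq in Ew by lra.
    pose proof (Cmod_ge_0 z). nra. }
  fold w in Hnz.
  replace (s * (RtoC (1 - rho) / (1 - w)))%C with Aq. exact HAq.
  transitivity ((Aq + - (w * Aq)) / (1 - w))%C.
  { field. exact Hnz. }
  rewrite E. field. exact Hnz.
Qed.

Theorem mainTheorem3 (c : nat) (lam mu alpha : R) (pi : nat -> nat -> R) :
  (1 <= c)%nat -> 0 < lam -> 0 < mu -> 0 < alpha ->
  lam / (INR c * mu) < 1 ->
  stationary c lam mu alpha pi ->
  let rho := lam / (INR c * mu) in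
  (* (p_{c-1,i})_i is a probability distribution *)
  ((forall i, 0 <= pres c pi i) /\ is_series (pres c pi) 1) /\
  (* generating-function identity for |z| <= 1 *)
  (forall z : C, Cmod z <= 1 ->
     exists s : C,
       is_series (fun i => (RtoC (pres c pi i) * Cpow z i)%C) s /\
       is_series (fun k => (RtoC (qc c pi k) * Cpow z k)%C)
                 (s * (RtoC (1 - rho) / (1 - RtoC rho * z)))%C) /\
  (* equivalently: Q^(c) =d Q_{ON-IDLE} + Q_Res (independent), i.e. the law of
     Q^(c) is the convolution of Geometric(1-rho) and (p_{c-1,i}) *)
  (forall n : nat,
     qc c pi n = sum_f_R0 (fun i => pres c pi i * ((1 - rho) * rho ^ (n - i))) n).
Proof.
  intros Hc Hl Hm Ha Hr Hst rho.
  destruct (real_part c lam mu alpha pi Hc Hl Hm Ha Hr Hst) as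
    [HpC [HM [Hpp [Hps [Hqs [Hqp [Hq0 HqS]]]]]]].
  fold rho in Hq0, HqS, Hr.
  assert (Hr0 : 0 <= rho).
  { unfold rho. apply Rlt_le, Rdiv_lt_0_compat; [lra|]. apply Rmult_lt_0_compat; [apply lt_0_INR; lia|lra]. }
  split; [split; assumption|]. split.
  { intros z Hz. apply gen_fun; auto. }
  induction n as [|n IH].
  { simpl. rewrite Hq0. ring. }
  rewrite tech5, HqS, IH, Nat.sub_diag.
  replace (rho * sum_f_R0 (fun i : nat => pres c pi i * ((1 - rho) * rho ^ (n - i))) n)
    with (sum_f_R0 (fun i : nat => pres c pi i * ((1 - rho) * rho ^ (S n - i))) n).
  { simpl. ring. }
  rewrite (scal_sum _ n rho). apply sum_eq. intros i Hi.
  replace (S n - i)%nat with (S (n - i)) by lia. simpl. ring.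
Qed.
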